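(* Let $G$ be a finite Dedekind group. Then $G$ is code-perfect if and only if every subgroup of $G$ is code-perfect.
   Context: A Dedekind group is a group all of whose subgroups are normal (every subgroup of a Dedekind group is again a Dedekind group). For a normal subgroup $H$ of a finite group $G$ with identity $e$, the subgroup sum graph $\Gamma_{G,H}$ is the simple undirected graph with vertex set $G$ in which distinct vertices $x,y$ are adjacent if and only if $xy\in H\setminus\{e\}$. A perfect code in a graph is a set $C$ of vertices that is independent and such that every vertex not in $C$ is adjacent to exactly one vertex of $C$. A finite group $G$ is code-perfect if $\Gamma_{G,H}$ admits a perfect code for every normal subgroup $H$ of $G$. *)

(* Defs.v *)
From mathcomp Require Import all_boot all_fingroup.
Set Implicit Arguments. Unset Strict Implicit. Unset Printing Implicit Defensive.
Local Open Scope group_scope.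

Definition dedekind (gT : finGroupType) (G : {group gT}) : Prop :=
  forall H : {group gT}, H \subset G -> H <| G.

Definition ssg_adj (gT : finGroupType) (H : {set gT}) (x y : gT) : bool :=
  (x != y) && (x * y \in H :\ 1).

Definition perfect_code (gT : finGroupType) (G H C : {set gT}) : Prop :=
  [/\ C \subset G,
      {in C &, forall x y, ~~ ssg_adj H x y}
    & {in G :\: C, forall x, #|[set y in C | ssg_adj H x y]| = 1%N}].

Definition code_perfect (gT : finGroupType) (G : {group gT}) : Prop :=
  forall H : {group gT}, H <| G -> exists C : {set gT}, perfect_code G H C.

(* Main.v *)
Require Import Defs.
From mathcomp Require Import all_boot all_fingroup.

Theorem lemma4p4 (gT : finGroupType) (G : {group gT}) :
  dedekind G ->
  (code_perfect G <-> (forall K : {group gT}, K \subset G -> code_perfect K)).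
Proof.
move=> dG; split; last by move=> h; apply: h.
move=> cpG K sKG H nHK.
have sHK : H \subset K by case/andP: nHK.
have [C [sCG indC uC]] := cpG H (dG H (subset_trans sHK sKG)).
exists (C :&: K); split.
- exact: subsetIr.
- by move=> x y /setIP[xC _] /setIP[yC _]; apply: indC.
move=> x /setDP[xK]; rewrite inE xK andbT => xnC.
have xG : x \in G :\: C by rewrite inE xnC (subsetP sKG).
rewrite -(uC x xG). apply: eq_card => y; rewrite !inE.
case: (boolP (y \in C)) => //= yC; case: (boolP (ssg_adj H x y)); rewrite ?andbF //.
move=> /andP[_]; rewrite !inE => /andP[_ xyH].
rewrite andbT.
have -> : y = (x^-1 * (x * y))%g by rewrite mulKg.
by rewrite groupM ?groupV // (subsetP sHK).
Qed.
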